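(* Let $P\subset\mathbb{R}^d$ be a finite dataset with $|P|=n$, let $s$ be the number of compute nodes, $t<s$, $\delta>0$, and let $A\in\{0,1\}^{s\times n}$ (columns indexed by the points of $P$) satisfy the straggler-resilience property with parameter $\delta$. For $i\in[s]$ let $P_i$ be the set of points of $P$ whose column has a $1$ in row $i$. Let $\mathcal{R}\subseteq[s]$ with $|\mathcal{R}|\ge s-t$ be the set of non-straggling nodes and $\mathbf{b}=(b_i)_{i\in\mathcal{R}}$ a corresponding non-negative recovery vector. For each $i\in\mathcal{R}$ let $Y_i$ be an optimal set of $k$ $k$-median centers for $P_i$, with weights $w_i(\mathbf{c})=|\mathrm{cluster}(\mathbf{c},P_i)|$ for $\mathbf{c}\in Y_i$. Let $Y=\bigcup_{i\in\mathcal{R}}Y_i$ with weight $w(\mathbf{c})=\sum_{i\in\mathcal{R}:\,\mathbf{c}\in Y_i}b_i w_i(\mathbf{c})$, and let $\widehat{C}$ be an optimal set of $k$ centers for the weighted $k$-median problem on $(Y,w)$. If $C^*$ is an optimal set of $k$-median centers for $P$, then $$\mathrm{cost}(P,\widehat{C})\le 3(1+\delta)\,\mathrm{cost}(P,C^* ).$$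
   Context: $d(\mathbf{x},C)=\min_{\mathbf{c}\in C}\|\mathbf{x}-\mathbf{c}\|_2$. The $k$-median cost is $\mathrm{cost}(Q,C)=\sum_{\mathbf{q}\in Q}d(\mathbf{q},C)$ and the weighted version is $\mathrm{cost}(Q,C,w)=\sum_{\mathbf{q}\in Q}w(\mathbf{q})d(\mathbf{q},C)$; optimal centers are minimizers over all sets of $k$ points in $\mathbb{R}^d$. $\mathrm{cluster}(\mathbf{c},P_i)$ is the set of points of $P_i$ whose closest center in $Y_i$ is $\mathbf{c}$ (ties broken arbitrarily so clusters partition $P_i$). Straggler-resilience property with parameter $\delta$: for every $\mathcal{R}\subseteq[s]$ with $|\mathcal{R}|\ge s-t$, letting $A_{\mathcal{R}}$ be the rows of $A$ indexed by $\mathcal{R}$, there is $\mathbf{b}\in\mathbb{R}^{|\mathcal{R}|}$ with non-negative entries (a recovery vector) such that $\mathbf{b}^TA_{\mathcal{R}}=(a_1,\ldots,a_n)$ with $1\le a_j\le1+\delta$ for all $j$. *)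

(* Defs.v *)
From mathcomp Require Import all_boot all_order all_algebra.
Set Implicit Arguments. Unset Strict Implicit. Unset Printing Implicit Defensive.
Import Order.TTheory GRing.Theory Num.Theory.
Local Open Scope ring_scope.

Section KMedian.
Variables (R : rcfType) (d : nat).
Notation pt := 'rV[R]_d.

Definition enorm (x : pt) : R := Num.sqrt (\sum_(i < d) (x ord0 i) ^+ 2).

(* d(x, C) = min_{c in C} ||x - c||_2, for a (nonempty) list of centers C.
   (The start value is a member of C when C is nonempty.) *)
Definition dist (x : pt) (C : seq pt) : R :=
  \big[Num.min/enorm (x - head 0 C)]_(c <- C) enorm (x - c).

Definition cost (n : nat) (p : 'I_n -> pt) (Q : {set 'I_n}) (C : seq pt) : R :=
  \sum_(j in Q) dist (p j) C.

(* weighted cost  cost(Y, C, w) = sum_{q in Y} w(q) d(q, C),  Y a duplicate-free list *)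
Definition wcost (Y : seq pt) (w : pt -> R) (C : seq pt) : R :=
  \sum_(q <- Y) w q * dist q C.

Definition opt_kmedian (k n : nat) (p : 'I_n -> pt) (Q : {set 'I_n}) (C : k.-tuple pt) :=
  forall C' : k.-tuple pt, cost p Q C <= cost p Q C'.

Definition opt_wkmedian (k : nat) (Y : seq pt) (w : pt -> R) (C : k.-tuple pt) :=
  forall C' : k.-tuple pt, wcost Y w C <= wcost Y w C'.

End KMedian.

(* Recovery vector for the set of surviving nodes Rs (b is only read on Rs):
   non-negative entries with  b^T A_Rs = (a_1..a_n),  1 <= a_j <= 1 + delta. *)
Definition recovery_vector (R : realFieldType) (s n : nat) (A : 'M[R]_(s, n))
    (delta : R) (Rs : {set 'I_s}) (b : 'I_s -> R) :=
  (forall i, i \in Rs -> 0 <= b i) /\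
  (forall j : 'I_n, 1 <= \sum_(i in Rs) b i * A i j <= 1 + delta).

Definition straggler_resilient (R : realFieldType) (s n t : nat) (A : 'M[R]_(s, n))
    (delta : R) :=
  forall Rs : {set 'I_s}, (s - t <= #|Rs|)%N ->
    exists b : 'I_s -> R, recovery_vector A delta Rs b.

Definition Pset (R : ringType) (s n : nat) (A : 'M[R]_(s, n)) (i : 'I_s) : {set 'I_n} :=
  [set j | A i j == 1].

(* Main.v *)
Require Import Defs.
From mathcomp Require Import all_boot all_order all_algebra.
From mathcomp Require Import ring lra.
Set Implicit Arguments. Unset Strict Implicit.
Import Order.TTheory GRing.Theory Num.Theory.
Local Open Scope ring_scope.

Section Geo.
Variables (R : rcfType) (d : nat).
Implicit Types (u v x y z : 'rV[R]_d).

Lemma cs_ineq (a b : 'I_d -> R) :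
  (\sum_i a i * b i) ^+ 2 <= (\sum_i a i ^+ 2) * (\sum_i b i ^+ 2).
Proof.
have E1 : (\sum_i a i ^+ 2) * (\sum_i b i ^+ 2) =
   \sum_i \sum_j (a i ^+ 2 * b j ^+ 2).
  by rewrite mulr_suml; apply: eq_bigr => i _; rewrite mulr_sumr.
have E2 : (\sum_i a i ^+ 2) * (\sum_i b i ^+ 2) =
   \sum_i \sum_j (a j ^+ 2 * b i ^+ 2).
  by rewrite mulrC mulr_suml; apply: eq_bigr => i _; rewrite mulr_sumr;
     apply: eq_bigr => j _; rewrite mulrC.
have E3 : (\sum_i a i * b i) ^+ 2 = \sum_i \sum_j (a i * b i * (a j * b j)).
  by rewrite expr2 mulr_suml; apply: eq_bigr => i _; rewrite mulr_sumr.
have H : 0 <= \sum_i \sum_j (a i * b j - a j * b i) ^+ 2.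
  by apply: sumr_ge0 => i _; apply: sumr_ge0 => j _; apply: sqr_ge0.
have E4 : \sum_i \sum_j (a i * b j - a j * b i) ^+ 2 =
   (\sum_i a i ^+ 2) * (\sum_i b i ^+ 2) + (\sum_i a i ^+ 2) * (\sum_i b i ^+ 2)
   - 2%:R * (\sum_i a i * b i) ^+ 2.
  rewrite {1}E1 E2 E3 -big_split /= mulr_sumr -sumrB; apply: eq_bigr => i _.
  rewrite -big_split /= mulr_sumr -sumrB; apply: eq_bigr => j _; ring.
rewrite E4 in H; lra.
Qed.

Lemma enorm_ge0 x : 0 <= enorm x.
Proof. exact: sqrtr_ge0. Qed.

Lemma enormD u v : enorm (u + v) <= enorm u + enorm v.
Proof.
rewrite /enorm.
set su := \sum_i u ord0 i ^+ 2; set sv := \sum_i v ord0 i ^+ 2.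
set suv := \sum_i u ord0 i * v ord0 i.
have hu : 0 <= su by apply: sumr_ge0 => i _; apply: sqr_ge0.
have hv : 0 <= sv by apply: sumr_ge0 => i _; apply: sqr_ge0.
have E : \sum_i (u + v) ord0 i ^+ 2 = su + sv + 2%:R * suv.
  rewrite /su /sv /suv mulr_sumr -!big_split /=; apply: eq_bigr => i _.
  rewrite mxE; ring.
have CS : suv <= Num.sqrt su * Num.sqrt sv.
  rewrite -sqrtrM // (le_trans (ler_norm _)) // -sqrtr_sqr.
  by apply: ler_wsqrtr; apply: cs_ineq.
have h0 : 0 <= Num.sqrt su + Num.sqrt sv by apply: addr_ge0; apply: sqrtr_ge0.
rewrite E -[X in _ <= X]ger0_norm // -sqrtr_sqr.
apply: ler_wsqrtr.
rewrite sqrrD !sqr_sqrtr //; lra.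
Qed.

Lemma enormN x : enorm (- x) = enorm x.
Proof. by rewrite /enorm; congr Num.sqrt; apply: eq_bigr => i _; rewrite mxE sqrrN. Qed.

Lemma enorm_tri x y z : enorm (x - z) <= enorm (x - y) + enorm (y - z).
Proof. by rewrite (_ : x - z = (x - y) + (y - z)) ?enormD //; rewrite addrA subrK. Qed.

Lemma enormB x y : enorm (x - y) = enorm (y - x).
Proof. by rewrite -enormN opprB. Qed.

Lemma bigmin_le (x0 : R) (C : seq 'rV[R]_d) (F : 'rV[R]_d -> R) c :
  c \in C -> \big[Num.min/x0]_(c' <- C) F c' <= F c.
Proof.
elim: C => [|a C IH] //; rewrite in_cons big_cons => /orP [/eqP ->|/IH h].
  by rewrite ge_min lexx.
by rewrite ge_min h orbT.
Qed.

Lemma bigmin_in (x0 : R) (C : seq 'rV[R]_d) (F : 'rV[R]_d -> R) :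
  \big[Num.min/x0]_(c' <- C) F c' \in x0 :: map F C.
Proof.
elim: C => [|a C IH]; first by rewrite big_nil mem_head.
rewrite big_cons /Num.min; case: ifP => _.
  by rewrite /= !inE eqxx orbT.
move: IH; rewrite /= !inE => /orP [->|->] //; by rewrite !orbT.
Qed.

Lemma dist_le x C c : c \in C -> dist x C <= enorm (x - c).
Proof. exact: bigmin_le. Qed.

Lemma dist_ex x C : C != [::] -> exists2 c, c \in C & dist x C = enorm (x - c).
Proof.
case: C => [|a C] // _.
have := bigmin_in (enorm (x - head 0 (a :: C))) (a :: C) (fun c => enorm (x - c)).
rewrite -/(dist x (a :: C)) inE => /orP [/eqP -> | /mapP [c hc ->]].
  by exists a; rewrite ?mem_head.
by exists c.
Qed.

Lemma dist_ge0 x C : 0 <= dist x C.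
Proof.
case: (altP (C =P [::])) => [->|hC]; first by rewrite /dist big_nil enorm_ge0.
by case: (dist_ex x hC) => c _ ->; apply: enorm_ge0.
Qed.

Lemma dist_tri x y C : C != [::] -> dist x C <= enorm (x - y) + dist y C.
Proof.
move=> hC; case: (dist_ex y hC) => c hc ->.
exact: le_trans (dist_le x hc) (enorm_tri x y c).
Qed.

End Geo.

Lemma sum_Pset (R : rcfType) s n (A : 'M[R]_(s, n)) i (f : 'I_n -> R) :
  (forall i j, A i j = 0 \/ A i j = 1) ->
  \sum_(j in Pset A i) f j = \sum_j A i j * f j.
Proof.
move=> H01; rewrite big_mkcond; apply: eq_bigr => j _; rewrite inE.
by case: (H01 i j) => ->; rewrite ?eqxx ?mul0r ?mul1r // eq_sym oner_eq0.
Qed.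

Theorem theorem2 (R : rcfType) (d n s t k : nat) (p : 'I_n -> 'rV[R]_d)
  (delta : R) (A : 'M[R]_(s, n)) (Rs : {set 'I_s}) (b : 'I_s -> R)
  (Y : 'I_s -> k.-tuple 'rV[R]_d) (sigma : 'I_s -> 'I_n -> 'I_k)
  (Chat Cstar : k.-tuple 'rV[R]_d) :
  injective p ->
  (0 < k)%N ->
  (t < s)%N ->
  0 < delta ->
  (forall i j, A i j = 0 \/ A i j = 1) ->
  straggler_resilient t A delta ->
  (s - t <= #|Rs|)%N ->
  recovery_vector A delta Rs b ->
  (* Y_i is an optimal set of k k-median centers for P_i *)
  (forall i, i \in Rs -> opt_kmedian p (Pset A i) (Y i)) ->
  (* sigma i assigns each point of P_i to a closest center of Y_i (ties arbitrary) *)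
  (forall i j, i \in Rs -> j \in Pset A i ->
     enorm (p j - tnth (Y i) (sigma i j)) = dist (p j) (Y i)) ->
  let w_i := fun i (c : 'rV[R]_d) =>
    (#|[set j in Pset A i | tnth (Y i) (sigma i j) == c]|)%:R : R in
  let Yall := undup (flatten [seq (Y i : seq _) | i <- enum Rs]) in
  let w := fun c => \sum_(i in Rs | c \in (Y i : seq _)) b i * w_i i c in
  opt_wkmedian Yall w Chat ->
  opt_kmedian p [set: 'I_n] Cstar ->
  cost p [set: 'I_n] Chat <= 3%:R * (1 + delta) * cost p [set: 'I_n] Cstar.
Proof.
have costT : forall C, cost p [set: 'I_n] C = \sum_j dist (p j) C.
  by move=> C; apply: eq_bigl => j; rewrite in_setT.
move=> injp k0 ts dpos H01 _ _ [bge0 ha] Yopt Hsig w_i Yall w Hhat Hstar.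
set y := fun i j => tnth (Y i) (sigma i j).
have Yne : forall (C : k.-tuple 'rV[R]_d), (C : seq _) != [::].
  by move=> C; rewrite -size_eq0 size_tuple -lt0n.
pose G C := \sum_(i in Rs) b i * \sum_(j in Pset A i) dist (p j) C.
pose D C := \sum_(i in Rs) b i * \sum_(j in Pset A i) dist (y i j) C.
pose H := \sum_(i in Rs) b i * cost p (Pset A i) (Y i).
have GE : forall C, G C = \sum_j (\sum_(i in Rs) b i * A i j) * dist (p j) C.
  move=> C; rewrite /G.
  under eq_bigr => i _ do rewrite (sum_Pset i _ H01) mulr_sumr.
  rewrite exchange_big /=; apply: eq_bigr => j _.
  by rewrite mulr_suml; apply: eq_bigr => i _; rewrite mulrA.
have step_a : cost p [set: 'I_n] Chat <= G Chat.
  rewrite GE costT; apply: ler_sum => j _.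
  have /andP [h1 _] := ha j.
  by rewrite -[X in X <= _]mul1r ler_wpM2r // dist_ge0.
have step_f : G Cstar <= (1 + delta) * cost p [set: 'I_n] Cstar.
  rewrite GE costT mulr_sumr; apply: ler_sum => j _.
  have /andP [_ h2] := ha j.
  by rewrite ler_wpM2r // dist_ge0.
have step_b : G Chat <= H + D Chat.
  rewrite /G /H /D -big_split /=; apply: ler_sum => i iR.
  rewrite -mulrDr ler_wpM2l ?bge0 // /cost -big_split /=; apply: ler_sum => j jP.
  rewrite -(Hsig i j iR jP); exact: dist_tri.
have step_d : D Cstar <= H + G Cstar.
  rewrite /G /H /D -big_split /=; apply: ler_sum => i iR.
  rewrite -mulrDr ler_wpM2l ?bge0 // /cost -big_split /=; apply: ler_sum => j jP.
  rewrite -(Hsig i j iR jP) enormB; exact: dist_tri.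
have step_e : H <= G Cstar.
  rewrite /G /H; apply: ler_sum => i iR.
  by rewrite ler_wpM2l ?bge0 //; apply: Yopt.
have WD : forall C, wcost Yall w C = D C.
have wE : forall c, w c = \sum_(i in Rs) b i * w_i i c.
    move=> c; rewrite /w big_mkcondr /=; apply: eq_bigr => i _.
    case: ifP => // hc; rewrite /w_i.
    suff -> : [set j in Pset A i | tnth (Y i) (sigma i j) == c] = set0.
      by rewrite cards0 mulr0.
    apply/setP => j; rewrite !inE; apply/negbTE/negP => /andP [_ /eqP E].
    by have := mem_tnth (sigma i j) (Y i); rewrite E hc.
  have yin : forall i j, i \in Rs -> y i j \in Yall.
    move=> i j iR; rewrite /Yall mem_undup; apply/flatten_mapP.
    by exists i; rewrite ?mem_enum // /y mem_tnth.
  have Yu : uniq Yall by apply: undup_uniq.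
  move=> C; rewrite /wcost /D.
  under eq_bigr => c _ do rewrite wE mulr_suml.
  rewrite exchange_big /=; apply: eq_bigr => i iR.
  under eq_bigr => c _ do rewrite -mulrA.
  rewrite -mulr_sumr; congr (_ * _).
  have E1 : forall j, dist (y i j) C =
      \sum_(c <- Yall) (if y i j == c then dist c C else 0).
    move=> j; rewrite (bigD1_seq (y i j)) ?yin //= eqxx big1 ?addr0 //.
    by move=> c; rewrite eq_sym => /negbTE ->.
  under [RHS]eq_bigr => j _ do rewrite E1.
  rewrite exchange_big /=; apply: eq_bigr => c _.
  rewrite -big_mkcondr /= /w_i.
  rewrite (eq_bigl (fun j => j \in [set j in Pset A i | tnth (Y i) (sigma i j) == c])); last first.
    by move=> j; rewrite inE.
  by rewrite sumr_const mulr_natl.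
have step_c : D Chat <= D Cstar by rewrite -!WD; apply: Hhat.
have G0 : 0 <= cost p [set: 'I_n] Cstar.
  by apply: sumr_ge0 => j _; apply: dist_ge0.
lra.
Qed.
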